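(* Assume every node of $G$ belongs to at least one $h$-clique. Let $f^*$ be any maximum flow in $\mathcal{H}$. Then in the residual graph $\mathcal{H}_{f^*}$ there is a directed path from $t$ to every node $\lambda\in\Lambda$.
   Context: Let $G=(V,E)$ be a finite simple undirected graph and $h\ge2$. An $h$-clique is a set of $h$ pairwise adjacent nodes; $\mu_h(G[W])$ counts $h$-cliques inside $W$; for nonempty $W$, $\rho_h(W)=\mu_h(G[W])/|W|$; $\rho_h^*=\max_{\emptyset\ne W\subseteq V}\rho_h(W)$; $deg_G(v,h)$ is the number of $h$-cliques containing $v$; $\Lambda$ is the set of $(h-1)$-cliques of $G$ contained in some $h$-clique. Flow network $\mathcal{H}=(V_\mathcal{H},E_\mathcal{H},c)$: $V_\mathcal{H}=V\cup\Lambda\cup\{s,t\}$; for $v\in V$: arcs $(s,v)$ cap. $deg_G(v,h)$, $(v,t)$ cap. $h\rho_h^*$, $(v,s),(t,v)$ cap. $0$; for $\lambda\in\Lambda$, $v\in\lambda$: $(\lambda,v)$ cap. $+\infty$, $(v,\lambda)$ cap. $0$; for $\lambda\in\Lambda$, $v\in V$ with $\lambda\cup\{v\}$ an $h$-clique: $(v,\lambda)$ cap. $1$, $(\lambda,v)$ cap. $0$; no other arcs. A flow $f$ satisfies $f(u,v)\le c(u,v)$, $f(v,u)=-f(u,v)$, conservation at nodes other than $s,t$; value $\sum_v f(s,v)$. The residual graph $\mathcal{H}_{f}$ has an arc $(u,v)$ whenever $(u,v)\in E_\mathcal{H}$ and $c(u,v)-f(u,v)>0$. *)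

(* Defs.v *)
From mathcomp Require Import all_boot all_order all_algebra.
Set Implicit Arguments. Unset Strict Implicit. Unset Printing Implicit Defensive.
Import Order.TTheory GRing.Theory Num.Theory.
Local Open Scope ring_scope.

Section CliqueFlow.
Variable V : finType.
Variable e : rel V.
Variable h : nat.
Variable R : realFieldType.

Definition is_clique (W : {set V}) : bool :=
  [forall x in W, forall y in W, (x != y) ==> e x y].

Definition hclique (W : {set V}) : bool := is_clique W && (#|W| == h)%N.

Definition mu_h (W : {set V}) : nat := #|[set K : {set V} | hclique K & K \subset W]|.

Definition rho_h (W : {set V}) : R := (mu_h W)%:R / (#|W|)%:R.

(* rho_h^* = max over nonempty W of rho_h(W) (all values are >= 0) *)
Definition rho_star : R := \big[Num.max/0]_(W : {set V} | W != set0) rho_h W.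

Definition deg_h (v : V) : nat := #|[set K : {set V} | hclique K & v \in K]|.

Definition Lambda : {set {set V}} :=
  [set L : {set V} | [&& is_clique L, (#|L| == h.-1)%N &
                        [exists K : {set V}, hclique K && (L \subset K)]]].

(* Nodes of the flow network: inl true = s, inl false = t,
   inr (inl v) = graph node v, inr (inr L) = set node L (meant to range over Lambda). *)
Definition node : finType := (bool + (V + {set V}))%type.
Definition src : node := inl true.
Definition snk : node := inl false.
Definition vnode (v : V) : node := inr (inl v).
Definition lnode (L : {set V}) : node := inr (inr L).

Definition lv_adj (L : {set V}) (v : V) : bool :=
  (L \in Lambda) && ((v \in L) || hclique (v |: L)).

(* E_H : the arcs of the network (including the capacity-0 reverse arcs) *)
Definition arcH (u w : node) : bool :=
  match u, w with
  | inl true, inr (inl _) => true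
  | inr (inl _), inl true => true
  | inr (inl _), inl false => true
  | inl false, inr (inl _) => true
  | inr (inr L), inr (inl v) => lv_adj L v
  | inr (inl v), inr (inr L) => lv_adj L v
  | _, _ => false
  end.

(* capacities: None = +infinity; non-arcs get capacity 0 *)
Definition capH (u w : node) : option R :=
  match u, w with
  | inl true, inr (inl v) => Some (deg_h v)%:R
  | inr (inl _), inl true => Some 0
  | inr (inl _), inl false => Some (h%:R * rho_star)
  | inl false, inr (inl _) => Some 0
  | inr (inr L), inr (inl v) =>
      if lv_adj L v && (v \in L) then None else Some 0
  | inr (inl v), inr (inr L) =>
      if lv_adj L v && (v \notin L) then Some 1 else Some 0
  | _, _ => Some 0
  end.

Definition le_cap (x : R) (c : option R) : bool :=
  match c with None => true | Some c => x <= c end.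

Definition lt_cap (x : R) (c : option R) : bool :=
  match c with None => true | Some c => x < c end.

Definition is_flow (f : node -> node -> R) : Prop :=
  [/\ (forall u w, le_cap (f u w) (capH u w)),
      (forall u w, f w u = - f u w) &
      (forall u, u != src -> u != snk -> \sum_(w : node) f u w = 0)].

Definition flow_value (f : node -> node -> R) : R := \sum_(w : node) f src w.

Definition is_max_flow (f : node -> node -> R) : Prop :=
  is_flow f /\ (forall g, is_flow g -> flow_value g <= flow_value f).

Definition residual (f : node -> node -> R) : rel node :=
  fun u w => arcH u w && lt_cap (f u w) (capH u w).

End CliqueFlow.

(* Main.v *)
Require Import Defs.
From mathcomp Require Import all_boot all_order all_algebra.
From mathcomp Require Import lra zify.
Set Implicit Arguments. Unset Strict Implicit.
Import Order.TTheory GRing.Theory Num.Theory.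
Local Open Scope ring_scope.

Section Aux.
Variables (V : finType) (e : rel V) (h : nat) (R : realFieldType).

Lemma eq_inr (A B : eqType) (x y : B) : (@inr A B x == inr y) = (x == y).
Proof. by apply/eqP/eqP => [[]|->]. Qed.
Lemma eq_inl (A B : eqType) (x y : A) : (@inl A B x == inl y) = (x == y).
Proof. by apply/eqP/eqP => [[]|->]. Qed.
Lemma eq_lr (A B : eqType) (x : A) (y : B) : (inl x == inr y) = false.
Proof. by []. Qed.
Lemma eq_rl (A B : eqType) (x : A) (y : B) : (inr y == inl x) = false.
Proof. by []. Qed.

Lemma arcH_sym (x y : node V) : arcH e h x y = arcH e h y x.
Proof. by case: x => [[]|[v|L]]; case: y => [[]|[w|M]]. Qed.

Lemma noarc_cap (x y : node V) : arcH e h x y = false -> capH e h R x y = Some 0.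
Proof.
case: x => [[]|[v|L]]; case: y => [[]|[w|M]] //=; move=> ->; by [].
Qed.

Lemma rho_star_ge K : hclique e h K -> (0 < h)%N -> rho_h e h R K <= rho_star e h R.
Proof.
move=> hK h0; rewrite /rho_star; apply: (le_bigmax_cond (T:=R)).
apply/eqP => K0; move: hK; rewrite /hclique K0 cards0 => /andP[_ /eqP H].
by rewrite -H in h0.
Qed.

Lemma hrho_ge1 K : hclique e h K -> (0 < h)%N -> 1 <= h%:R * rho_star e h R.
Proof.
move=> hK h0; have H1 := ler_wpM2l (ler0n R h) (rho_star_ge hK h0); apply: le_trans H1.

have cK : #|K| = h by move: hK => /andP[_ /eqP].
have mu1 : (1 <= mu_h e h K)%N.
  by apply/card_gt0P; exists K; rewrite inE hK subxx.
rewrite /rho_h cK mulrC divfK; last by rewrite pnatr_eq0 -lt0n.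
by rewrite ler1n.
Qed.

Definition dl (x y a b : node V) : R := ((x == a) && (y == b))%:R.

Lemma sum_dl x a b : \sum_y dl x y a b = (x == a)%:R.
Proof.
rewrite /dl; case: (x == a) => /=; last by rewrite big1.
by rewrite (bigD1 b) //= eqxx big1 ?addr0 // => y /negbTE ->.
Qed.

Lemma dlC x y a b : dl y x a b = dl x y b a.
Proof. by rewrite /dl andbC. Qed.

Definition gfl (u : V) (x y : node V) : R :=
  dl x y (src V) (vnode u) - dl x y (vnode u) (src V)
  + dl x y (vnode u) (snk V) - dl x y (snk V) (vnode u).

Lemma cap_nonneg x y : 0 <= rho_star e h R -> le_cap 0 (capH e h R x y).
Proof.
move=> r0; case: x => [[]|[v|L]]; case: y => [[]|[w|M]] //=;
  try (case: ifP => _ //=); by rewrite ?ler0n ?mulr_ge0 ?ler01.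
Qed.

Lemma gfl_flow u : (1 <= deg_h e h u)%N -> 1 <= h%:R * rho_star e h R ->
  is_flow e h (gfl u).
Proof.
move=> d1 r1.
have r0 : 0 <= rho_star e h R.
  rewrite leNgt; apply/negP => rlt.
  have := mulr_ge0_le0 (ler0n R h) (ltW rlt); lra.
split.
- move=> x y; rewrite /gfl /dl.
  case: x => [[]|[v|L]]; case: y => [[]|[w|M]]; rewrite /= /src /snk /vnode ?eq_inr ?eq_inl ?eq_lr ?eq_rl /=.
  all: rewrite ?andbF ?andbT ?subrr ?addr0 ?sub0r ?add0r ?subr0 ?oppr0.
  all: try (case: ifP => _ /=).
  all: idtac.
  all: try by [].
  + case: eqP => [->|_]; last by rewrite ler0n.
    by rewrite ler1n.
  + by rewrite lerNl oppr0 ler0n.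
  + by rewrite lerNl oppr0 ler0n.
  + case: eqP => [_|_] //; exact: mulr_ge0.
- by move=> x y; rewrite /gfl !(dlC y x); lra.
- move=> x xs xt; rewrite /gfl sumrB big_split /= sumrB !sum_dl.
  by rewrite (negbTE xs) (negbTE xt); lra.
Qed.
Lemma gfl_value u : flow_value (gfl u) = 1.
Proof.
rewrite /flow_value /gfl sumrB big_split /= sumrB !sum_dl.
rewrite /src /snk /vnode ?eq_inr ?eq_inl ?eq_lr ?eq_rl /=; lra.
Qed.

Lemma sat_nn (a : R) c : ~~ lt_cap a c -> le_cap 0 c -> 0 <= a.
Proof. case: c => [c|] //=; rewrite -leNgt => H H0; exact: le_trans H. Qed.

End Aux.

Unset Implicit Arguments.
Set Strict Implicit.

Theorem lemma6 (V : finType) (e : rel V) (h : nat) (R : realFieldType)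
  (e_sym : symmetric e) (e_irr : irreflexive e) (h_ge2 : (2 <= h)%N)
  (cover : forall v : V, exists K : {set V}, hclique e h K && (v \in K))
  (f : node V -> node V -> R) (fmax : is_max_flow e h f) :
  forall L : {set V}, L \in Lambda e h ->
    connect (residual e h f) (snk V) (lnode L).
Proof.
move=> L LL; apply: contraT => nR.
move: (LL); rewrite inE => /and3P[cL /eqP cardL /existsP[K /andP[hK LK]]].
have cK : #|K| = h by move: hK => /andP[_ /eqP].
have h0 : (0 < h)%N by apply: leq_trans h_ge2.
have [u uK uL] : exists2 u, u \in K & u \notin L.
  apply/subsetPn; apply/negP => KL; have := subset_leq_card KL.
  rewrite cK cardL; lia.
have uLK : u |: L = K.
  apply/eqP; rewrite eqEcard subUset sub1set uK LK /= cardsU1 uL cardL cK.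
  lia.
case: fmax => [[fc fanti fcons] fmaxv].
set Rt := connect (residual e h f) (snk V).
have Rsnk : Rt (snk V) by exact: connect0.
have sat y x : Rt y -> ~~ Rt x -> arcH e h y x -> ~~ lt_cap (f y x) (capH e h R y x).
  move=> Ry nx a; apply/negP => lt; move/negP: nx; apply.
  by apply: connect_trans Ry (connect1 _); rewrite /residual a lt.
have r1 := hrho_ge1 R hK h0.
have r0 : 0 <= rho_star e h R.
  rewrite leNgt; apply/negP => rlt.
  have := mulr_ge0_le0 (ler0n R h) (ltW rlt); lra.
have nn y x : Rt y -> ~~ Rt x -> 0 <= f y x.
  move=> Ry nx; case a: (arcH e h y x).
    have := sat_nn (sat _ _ Ry nx a) (cap_nonneg y x r0). exact.
  rewrite arcH_sym in a; have := fc x y; rewrite noarc_cap //= fanti; lra.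
have du : (1 <= deg_h e h u)%N by apply/card_gt0P; exists K; rewrite inE hK uK.
set D := \sum_(x | ~~ Rt x) \sum_y f x y.
set S := \sum_(x | ~~ Rt x) \sum_(y | ~~ Rt y) f x y.
set D' := \sum_(x | ~~ Rt x) \sum_(y | Rt y) f x y.
have DS : D = S + D'.
  rewrite /D /S /D' -big_split; apply: eq_bigr => x _.
  by rewrite (bigID Rt) /= addrC.
have S0 : S = 0.
  have : S = - S.
    rewrite {1}/S exchange_big /= -sumrN; apply: eq_bigr => x _.
    rewrite -sumrN; apply: eq_bigr => y _; by rewrite fanti.
  lra.
have D'le : forall x0 y0, ~~ Rt x0 -> Rt y0 -> D' <= f x0 y0.
  move=> x0 y0 nx0 Ry0; rewrite /D' (bigD1 x0) //= (bigD1 y0) //=.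
  have H1 : \sum_(y | Rt y && (y != y0)) f x0 y <= 0.
    apply: sumr_le0 => y /andP[Ry _]; rewrite fanti oppr_le0; exact: nn.
  have H2 : \sum_(i | ~~ Rt i && (i != x0)) \sum_(y | Rt y) f i y <= 0.
    apply: sumr_le0 => x /andP[nx _]; apply: sumr_le0 => y Ry.
    rewrite fanti oppr_le0; exact: nn.
  lra.
have D'0 : D' <= 0.
  apply: sumr_le0 => x nx; apply: sumr_le0 => y Ry.
  rewrite fanti oppr_le0; exact: nn.
case Rs: (Rt (src V)).
- have D0 : D = 0.
    apply: big1 => x nx; apply: fcons; apply/eqP => ex; move: nx; rewrite ex.
      by rewrite Rs.
    by rewrite Rsnk.
  case Ru: (Rt (vnode u)).
  + have := D'le (lnode L) (vnode u) nR Ru.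
    have := sat (vnode u) (lnode L) Ru nR.
    have adj : lv_adj e h L u by rewrite /lv_adj LL uLK hK orbT.
    rewrite /= adj uL /= -leNgt fanti => /(_ isT) H1 H2; exfalso; clear -H1 H2 DS S0 D0; lra.
  + have := D'le (vnode u) (src V) (negbT Ru) Rs.
    have := sat (src V) (vnode u) Rs (negbT Ru) isT.
    rewrite /= -leNgt fanti => H1 H2.
    have H3 : 1 <= (deg_h e h u)%:R :> R by rewrite ler1n.
    exfalso; clear -H1 H2 H3 DS S0 D0; lra.
- have Dv : D = flow_value f.
    rewrite /D (bigD1 (src V)) ?Rs //= [X in _ + X]big1 ?addr0 // => x /andP[nx xs].
    apply: fcons => //; apply/eqP => ex; move: nx; by rewrite ex Rsnk.
  have := fmaxv _ (gfl_flow du r1); rewrite gfl_value => H1; exfalso; clear -H1 Dv DS S0 D'0; lra.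
Qed.
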